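(* Let $\delta\in(0,1/2)$ and let $y_0>2$ be such that for every $y\in[2,y_0]$ and $R>2$ the map $x\mapsto g_R(x,y)x^{-\delta}$ is non-increasing on $(0,\infty)$. Then for all $R>2$, $x\ge0$, $y\in[2,y_0]$: (i) $xg_R(x,y)\le(1+\delta)\rho_R(x,y)$; (ii) $xg_R(x,y)^2\le(1+2\delta)h_R(x,y)$; (iii) $xh_R(x,y)\le(1+\delta)^2\rho_R(x,y)^2$; (iv) $xg_R(x,y)^2-h_R(x,y)\le\dfrac{2\delta(1+\delta)}{1+2\delta}\rho_R(x,y)g_R(x,y)$; (v) $\rho_R(x,y)^2\le2(1+2\delta)\phi_R(x,y)\le2(1+2\delta)\tau(x,y)$; (vi) $(\partial_x\psi_R(x,y))^2\le(1+2\delta)g_R(x,y)^2$.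
   Context: Let $\xi$ be a nondecreasing $C^2$ function on $[0,\infty)$ with $\xi(x)=(x-1)^3\vee0$ for $x\in[0,3/2]$ and $\xi(x)=1$ for $x\ge2$. For $x\ge0$, $y\ge2$: $\zeta(x,y)=2x+(yx^{y-1}-2x)\xi(x)$, $\tau(x,y)=\int_0^x\zeta(s,y)\,ds$. For $R>2$: $g_R(x,y)=\sqrt{(\partial_x\zeta)(x\wedge R,y)}$, $h_R(x,y)=\int_0^xg_R(s,y)^2\,ds$, $\phi_R(x,y)=\int_0^xh_R(s,y)\,ds$, $\rho_R(x,y)=\int_0^xg_R(s,y)\,ds$, $\psi_R(x,y)=\sqrt{xh_R(x,y)}$ (at $x=0$, $\partial_x\psi_R$ denotes the right derivative). *)

(* Defs.v *)
From Stdlib Require Import Reals Lra Classical ClassicalEpsilon.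
Open Scope R_scope.

(* Real power with the convention x^a := 0 for x <= 0 (only used with x >= 0). *)
Definition rpow (x a : R) : R :=
  if Rlt_dec 0 x then Rpower x a else 0.

(* Riemann integral \int_a^b f, made total (0 if f is not Riemann integrable). *)
Definition integral (f : R -> R) (a b : R) : R :=
  match excluded_middle_informative (inhabited (Riemann_integrable f a b)) with
  | left H => RiemannInt (epsilon H (fun _ => True))
  | right _ => 0
  end.

Definition right_deriv_lim (f : R -> R) (x l : R) : Prop :=
  forall eps, 0 < eps -> exists d, 0 < d /\
    forall h, 0 < h < d -> Rabs ((f (x + h) - f x) / h - l) < eps.

(* Derivative of a function defined on [0,oo): the usual derivative at x > 0,
   the right derivative at x = 0 (value 0 if it does not exist). *)
Definition pDx (f : R -> R) (x : R) : R :=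
  if Rlt_dec 0 x then
    match excluded_middle_informative (exists l, derivable_pt_lim f x l) with
    | left H => proj1_sig (constructive_indefinite_description _ H)
    | right _ => 0
    end
  else
    match excluded_middle_informative (exists l, right_deriv_lim f x l) with
    | left H => proj1_sig (constructive_indefinite_description _ H)
    | right _ => 0
    end.

(* xi is C^2 on (0,oo) (together with xi = 0 on [0,1] this is C^2 on [0,oo)). *)
Definition C2_pos (xi : R -> R) : Prop :=
  exists xi1 xi2 : R -> R,
    forall x, 0 < x ->
      derivable_pt_lim xi x (xi1 x) /\ derivable_pt_lim xi1 x (xi2 x) /\
      continuity_pt xi2 x.

Definition zeta (xi : R -> R) (x y : R) : R :=
  2 * x + (y * rpow x (y - 1) - 2 * x) * xi x.

Definition tau (xi : R -> R) (x y : R) : R :=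
  integral (fun s => zeta xi s y) 0 x.

Definition gR (xi : R -> R) (R0 x y : R) : R :=
  sqrt (pDx (fun s => zeta xi s y) (Rmin x R0)).

Definition hR (xi : R -> R) (R0 x y : R) : R :=
  integral (fun s => (gR xi R0 s y) ^ 2) 0 x.

Definition phiR (xi : R -> R) (R0 x y : R) : R :=
  integral (fun s => hR xi R0 s y) 0 x.

Definition rhoR (xi : R -> R) (R0 x y : R) : R :=
  integral (fun s => gR xi R0 s y) 0 x.

Definition psiR (xi : R -> R) (R0 x y : R) : R :=
  sqrt (x * hR xi R0 x y).

(* Main.v *)
Require Import Defs.
From Stdlib Require Import Reals.
From Stdlib Require Import Lra Classical ClassicalEpsilon.
From Coquelicot Require Import Coquelicot.
Open Scope R_scope.

Lemma dq_right_ge (f : R -> R) x l c :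
  derivable_pt_lim f x l ->
  (exists d, 0 < d /\ forall h, 0 < h < d -> c <= (f (x + h) - f x) / h) -> c <= l.
Proof.
  intros Hl [d [Hd Hq]].
  destruct (Rle_or_lt c l) as [|Hlt]; [assumption|exfalso].
  destruct (Hl (c - l)) as [e He]; [lra|].
  set (h := Rmin (d/2) (e/2)).
  assert (Hh0 : 0 < h) by (unfold h, Rmin; destruct Rle_dec; pose proof (cond_pos e); lra).
  assert (Hh1 : h < d) by (unfold h, Rmin; destruct Rle_dec; pose proof (cond_pos e); lra).
  assert (Hh2 : h < e) by (unfold h, Rmin; destruct Rle_dec; pose proof (cond_pos e); lra).
  specialize (He h ltac:(lra) ltac:(rewrite Rabs_right; lra)).
  specialize (Hq h ltac:(lra)).
  apply Rabs_def2 in He. lra.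
Qed.

Lemma dq_right_le (f : R -> R) x l c :
  derivable_pt_lim f x l ->
  (exists d, 0 < d /\ forall h, 0 < h < d -> (f (x + h) - f x) / h <= c) -> l <= c.
Proof.
  intros Hl [d [Hd Hq]].
  destruct (Rle_or_lt l c) as [|Hlt]; [assumption|exfalso].
  destruct (Hl (l - c)) as [e He]; [lra|].
  set (h := Rmin (d/2) (e/2)).
  assert (Hh0 : 0 < h) by (unfold h, Rmin; destruct Rle_dec; pose proof (cond_pos e); lra).
  assert (Hh1 : h < d) by (unfold h, Rmin; destruct Rle_dec; pose proof (cond_pos e); lra).
  assert (Hh2 : h < e) by (unfold h, Rmin; destruct Rle_dec; pose proof (cond_pos e); lra).
  specialize (He h ltac:(lra) ltac:(rewrite Rabs_right; lra)).
  specialize (Hq h ltac:(lra)).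
  apply Rabs_def2 in He. lra.
Qed.

Lemma dq_left_ge (f : R -> R) x l c :
  derivable_pt_lim f x l ->
  (exists d, 0 < d /\ forall h, - d < h < 0 -> c <= (f (x + h) - f x) / h) -> c <= l.
Proof.
  intros Hl [d [Hd Hq]].
  destruct (Rle_or_lt c l) as [|Hlt]; [assumption|exfalso].
  destruct (Hl (c - l)) as [e He]; [lra|].
  set (h := Rmin (d/2) (e/2)).
  assert (Hh0 : 0 < h) by (unfold h, Rmin; destruct Rle_dec; pose proof (cond_pos e); lra).
  assert (Hh1 : h < d) by (unfold h, Rmin; destruct Rle_dec; pose proof (cond_pos e); lra).
  assert (Hh2 : h < e) by (unfold h, Rmin; destruct Rle_dec; pose proof (cond_pos e); lra).
  specialize (He (-h) ltac:(lra) ltac:(rewrite Rabs_left; lra)).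
  specialize (Hq (-h) ltac:(lra)).
  apply Rabs_def2 in He. lra.
Qed.

Lemma dq_left_le (f : R -> R) x l c :
  derivable_pt_lim f x l ->
  (exists d, 0 < d /\ forall h, - d < h < 0 -> (f (x + h) - f x) / h <= c) -> l <= c.
Proof.
  intros Hl [d [Hd Hq]].
  destruct (Rle_or_lt l c) as [|Hlt]; [assumption|exfalso].
  destruct (Hl (l - c)) as [e He]; [lra|].
  set (h := Rmin (d/2) (e/2)).
  assert (Hh0 : 0 < h) by (unfold h, Rmin; destruct Rle_dec; pose proof (cond_pos e); lra).
  assert (Hh1 : h < d) by (unfold h, Rmin; destruct Rle_dec; pose proof (cond_pos e); lra).
  assert (Hh2 : h < e) by (unfold h, Rmin; destruct Rle_dec; pose proof (cond_pos e); lra).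
  specialize (He (-h) ltac:(lra) ltac:(rewrite Rabs_left; lra)).
  specialize (Hq (-h) ltac:(lra)).
  apply Rabs_def2 in He. lra.
Qed.

Lemma right_deriv_unique f x l1 l2 :
  right_deriv_lim f x l1 -> right_deriv_lim f x l2 -> l1 = l2.
Proof.
  intros H1 H2.
  destruct (Req_dec l1 l2) as [|Hne]; [assumption|exfalso].
  set (e := Rabs (l1 - l2) / 2).
  assert (He : 0 < e) by (unfold e; assert (l1 - l2 <> 0) by lra; pose proof (Rabs_pos_lt _ H); lra).
  destruct (H1 e He) as [d1 [Hd1 P1]]. destruct (H2 e He) as [d2 [Hd2 P2]].
  set (h := Rmin (d1/2) (d2/2)).
  assert (Hh0 : 0 < h) by (unfold h, Rmin; destruct Rle_dec; lra).
  assert (Hh1 : h < d1) by (unfold h, Rmin; destruct Rle_dec; lra).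
  assert (Hh2 : h < d2) by (unfold h, Rmin; destruct Rle_dec; lra).
  specialize (P1 h ltac:(lra)). specialize (P2 h ltac:(lra)).
  set (q := (f (x + h) - f x) / h) in *.
  assert (Rabs (l1 - l2) <= Rabs (q - l2) + Rabs (q - l1)).
  { replace (l1 - l2) with ((q - l2) - (q - l1)) by ring.
    eapply Rle_trans; [apply Rabs_triang|]. rewrite Rabs_Ropp. lra. }
  unfold e in *. lra.
Qed.

Lemma pDx_pos f x l : 0 < x -> derivable_pt_lim f x l -> pDx f x = l.
Proof.
  intros Hx Hl. unfold pDx. destruct (Rlt_dec 0 x); [|lra].
  destruct (excluded_middle_informative _) as [H|H].
  - destruct (constructive_indefinite_description _ H) as [l' Hl']. simpl.
    eapply uniqueness_limite; eauto.
  - exfalso; apply H; eauto.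
Qed.

Lemma pDx_zero f l : right_deriv_lim f 0 l -> pDx f 0 = l.
Proof.
  intros Hl. unfold pDx. destruct (Rlt_dec 0 0); [lra|].
  destruct (excluded_middle_informative _) as [H|H].
  - destruct (constructive_indefinite_description _ H) as [l' Hl']. simpl.
    eapply right_deriv_unique; eauto.
  - exfalso; apply H; eauto.
Qed.

Lemma pDx_cases f x :
  pDx f x = 0 \/ (0 < x /\ derivable_pt_lim f x (pDx f x)) \/
  (~ 0 < x /\ right_deriv_lim f x (pDx f x)).
Proof.
  unfold pDx. destruct (Rlt_dec 0 x).
  - destruct (excluded_middle_informative _) as [H|H]; [|auto].
    destruct (constructive_indefinite_description _ H) as [l' Hl']. simpl. auto.
  - destruct (excluded_middle_informative _) as [H|H]; [|auto].
    destruct (constructive_indefinite_description _ H) as [l' Hl']. simpl. auto.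
Qed.

Lemma integral_RInt f g a b :
  a <= b -> (forall x, a <= x <= b -> f x = g x) -> ex_RInt g a b ->
  integral f a b = RInt g a b.
Proof.
  intros Hab Hfg Hg.
  assert (Hf : ex_RInt f a b).
  { apply ex_RInt_ext with g; [|assumption]. intros x Hx.
    rewrite Rmin_left in Hx by lra. rewrite Rmax_right in Hx by lra.
    symmetry; apply Hfg; lra. }
  rewrite (RInt_ext g f).
  2:{ intros x Hx. rewrite Rmin_left in Hx by lra. rewrite Rmax_right in Hx by lra.
    symmetry; apply Hfg; lra. }
  unfold integral. destruct (excluded_middle_informative _) as [H|H].
  - rewrite (RInt_Reals f a b (epsilon H (fun _ => True))). reflexivity.
  - exfalso. apply H. constructor. apply ex_RInt_Reals_0. assumption.
Qed.

Lemma loc_pos (P : R -> Prop) t : 0 < t -> (forall s, 0 < s -> P s) -> locally t P.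
Proof.
  intros Ht HP. exists (mkposreal t Ht). intros s Hs. apply HP.
  change (Rabs (s - t) < t) in Hs. apply Rabs_def2 in Hs. lra.
Qed.

Lemma loc_lt (P : R -> Prop) t c : t < c -> (forall s, s < c -> P s) -> locally t P.
Proof.
  intros Ht HP. assert (H : 0 < c - t) by lra. exists (mkposreal _ H). intros s Hs. apply HP.
  change (Rabs (s - t) < c - t) in Hs. apply Rabs_def2 in Hs. lra.
Qed.

Definition xiH (xi xi1 xi2 : R -> R) : Prop :=
  (forall x, 0 < x -> derivable_pt_lim xi x (xi1 x) /\ derivable_pt_lim xi1 x (xi2 x)) /\
  (forall a b, 0 <= a -> a <= b -> xi a <= xi b) /\
  (forall x, 0 <= x <= 3/2 -> xi x = Rmax ((x - 1) ^ 3) 0) /\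
  (forall x, 2 <= x -> xi x = 1).


Lemma X1 xi xi1 xi2 : xiH xi xi1 xi2 -> forall t, 0 <= t <= 1 -> xi t = 0.
Proof.
  intros [_ [_ [Hl _]]] t Ht. rewrite Hl by lra. unfold Rmax. destruct Rle_dec; [reflexivity|].
  exfalso. apply n. assert (0 <= 1 - t) by lra.
  replace ((t-1)^3) with (- ((1-t)^3)) by ring.
  pose proof (pow_le (1-t) 3 H). lra.
Qed.

Lemma X2 xi xi1 xi2 : xiH xi xi1 xi2 -> forall t, 2 <= t -> xi t = 1.
Proof. intros [_ [_ [_ Hh]]]; auto. Qed.

Lemma X3 xi xi1 xi2 : xiH xi xi1 xi2 -> forall t, 0 <= t -> 0 <= xi t.
Proof.
  intros H t Ht. rewrite <- (X1 _ _ _ H 0) by lra. destruct H as [_ [Hm _]]. apply Hm; lra.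
Qed.

Lemma X4 xi xi1 xi2 : xiH xi xi1 xi2 -> forall t, 0 < t <= 1 -> xi1 t = 0.
Proof.
  intros H t Ht. pose proof H as [Hd _]. destruct (Hd t ltac:(lra)) as [D _].
  assert (Q : forall h, - t < h < 0 -> (xi (t + h) - xi t) / h = 0).
  { intros h Hh. rewrite (X1 _ _ _ H (t+h)) by lra. rewrite (X1 _ _ _ H t) by lra.
    unfold Rdiv; ring. }
  apply Rle_antisym.
  - apply (dq_left_le xi t _ 0 D). exists t. split; [lra|]. intros h Hh. rewrite Q; lra.
  - apply (dq_left_ge xi t _ 0 D). exists t. split; [lra|]. intros h Hh. rewrite Q; lra.
Qed.

Lemma X5 xi xi1 xi2 : xiH xi xi1 xi2 -> forall t, 2 <= t -> xi1 t = 0.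
Proof.
  intros H t Ht. pose proof H as [Hd _]. destruct (Hd t ltac:(lra)) as [D _].
  assert (Q : forall h, 0 < h < 1 -> (xi (t + h) - xi t) / h = 0).
  { intros h Hh. rewrite (X2 _ _ _ H (t+h)) by lra. rewrite (X2 _ _ _ H t) by lra.
    unfold Rdiv; ring. }
  apply Rle_antisym.
  - apply (dq_right_le xi t _ 0 D). exists 1. split; [lra|]. intros h Hh. rewrite Q; lra.
  - apply (dq_right_ge xi t _ 0 D). exists 1. split; [lra|]. intros h Hh. rewrite Q; lra.
Qed.

Lemma X6 xi xi1 xi2 : xiH xi xi1 xi2 -> forall t, 0 < t -> 0 <= xi1 t.
Proof.
  intros H t Ht. pose proof H as [Hd [Hm _]]. destruct (Hd t ltac:(lra)) as [D _].
  apply (dq_right_ge xi t _ 0 D). exists 1. split; [lra|]. intros h Hh.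
  apply Rdiv_le_0_compat; [|lra]. assert (xi t <= xi (t+h)) by (apply Hm; lra). lra.
Qed.

Definition Zf (xi xi1 : R -> R) (y t : R) : R :=
  2 + (y * (y - 1) * Rpower t (y - 2) - 2) * xi t + (y * Rpower t (y - 1) - 2 * t) * xi1 t.

Lemma Rpower_deriv t a : 0 < t -> is_derive (fun s => Rpower s a) t (a * Rpower t (a - 1)).
Proof. intros. apply is_derive_Reals. apply derivable_pt_lim_power. auto. Qed.

Lemma zeta_deriv xi xi1 xi2 y t : xiH xi xi1 xi2 -> 0 < t ->
  is_derive (fun s => zeta xi s y) t (Zf xi xi1 y t).
Proof.
  intros H Ht. pose proof H as [Hd _].
  apply is_derive_ext_loc with (fun s => 2 * s + (y * Rpower s (y - 1) - 2 * s) * xi s).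
  { apply loc_pos; [lra|]. intros s Hs. unfold zeta, rpow. destruct Rlt_dec; [reflexivity|lra]. }
  assert (Dx : is_derive xi t (xi1 t)) by (apply is_derive_Reals; apply Hd; lra).
  assert (Dp : is_derive (fun s => Rpower s (y-1)) t ((y-1) * Rpower t (y - 1 - 1)))
    by (apply Rpower_deriv; lra).
  evar (L : R).
  assert (E : is_derive (fun s => 2 * s + (y * Rpower s (y - 1) - 2 * s) * xi s) t L).
  { auto_derive.
    - split; [eexists; exact Dp|]. split; [eexists; exact Dx|]. exact I.
    - replace (Derive (fun x : R => Rpower x (y - 1)) t) with ((y-1) * Rpower t (y - 1 - 1))
        by (symmetry; apply is_derive_unique; exact Dp).
      replace (Derive (fun x : R => xi x) t) with (xi1 t)
        by (symmetry; apply is_derive_unique; exact Dx).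
      unfold L. reflexivity. }
  replace (Zf xi xi1 y t) with L; [exact E|]. unfold L, Zf.
  replace (y - 1 - 1) with (y - 2) by ring. ring.
Qed.

Lemma Zf_cont xi xi1 xi2 y t : xiH xi xi1 xi2 -> 0 < t -> continuous (Zf xi xi1 y) t.
Proof.
  intros H Ht. pose proof H as [Hd _].
  apply (ex_derive_continuous (Zf xi xi1 y)). unfold Zf.
  assert (Dx : is_derive xi t (xi1 t)) by (apply is_derive_Reals; apply Hd; lra).
  assert (Dx1 : is_derive xi1 t (xi2 t)) by (apply is_derive_Reals; apply Hd; lra).
  assert (Dp : is_derive (fun s => Rpower s (y-1)) t ((y-1) * Rpower t (y - 1 - 1)))
    by (apply Rpower_deriv; lra).
  assert (Dp2 : is_derive (fun s => Rpower s (y-2)) t ((y-2) * Rpower t (y - 2 - 1)))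
    by (apply Rpower_deriv; lra).
  auto_derive. repeat split; eexists; eassumption.
Qed.

Lemma lip_cont (g : R -> R) t : (forall u v, Rabs (g u - g v) <= Rabs (u - v)) -> continuous g t.
Proof.
  intros Hg. unfold continuous. apply filterlim_locally. intros eps.
  exists eps. intros s Hs. change (Rabs (g s - g t) < eps). change (Rabs (s - t) < eps) in Hs.
  specialize (Hg s t). lra.
Qed.

Lemma Rmax_lip c u v : Rabs (Rmax c u - Rmax c v) <= Rabs (u - v).
Proof. unfold Rmax; repeat destruct Rle_dec; unfold Rabs; repeat destruct Rcase_abs; lra. Qed.
Lemma Rmin_lip c u v : Rabs (Rmin u c - Rmin v c) <= Rabs (u - v).
Proof. unfold Rmin; repeat destruct Rle_dec; unfold Rabs; repeat destruct Rcase_abs; lra. Qed.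

Definition clamp (R0 t : R) := Rmax 1 (Rmin t R0).

Lemma clamp_cont R0 t : continuous (clamp R0) t.
Proof.
  apply lip_cont. intros u v. unfold clamp. eapply Rle_trans; [apply Rmax_lip|]. apply Rmin_lip.
Qed.

Lemma Rmax1_cont t : continuous (Rmax 1) t.
Proof. apply lip_cont. intros; apply Rmax_lip. Qed.

Lemma Z1 xi xi1 xi2 y : xiH xi xi1 xi2 -> forall t, 0 < t <= 1 -> Zf xi xi1 y t = 2.
Proof.
  intros H t Ht. unfold Zf. rewrite (X1 _ _ _ H t) by lra. rewrite (X4 _ _ _ H t) by lra. ring.
Qed.

Lemma Rpower_ge1 t a : 1 <= t -> 0 <= a -> 1 <= Rpower t a.
Proof. intros. rewrite <- (Rpower_O t) by lra. apply Rle_Rpower; lra. Qed.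

Lemma Rpower_succ t a : 0 < t -> Rpower t (a + 1) = t * Rpower t a.
Proof. intros. rewrite Rpower_plus, Rpower_1 by lra. ring. Qed.

Lemma Z2 xi xi1 xi2 y : xiH xi xi1 xi2 -> 2 <= y -> forall t, 1 <= t -> 2 <= Zf xi xi1 y t.
Proof.
  intros H Hy t Ht. unfold Zf.
  pose proof (Rpower_ge1 t (y-2) Ht ltac:(lra)) as P.
  replace (y - 1) with ((y - 2) + 1) by ring. rewrite Rpower_succ by lra.
  pose proof (X3 _ _ _ H t ltac:(lra)). pose proof (X6 _ _ _ H t ltac:(lra)).
  assert (Hyy : 2 <= y * (y - 1)) by nra.
  assert (A1 : 0 <= y * (y - 1) * Rpower t (y - 2) - 2) by nra.
  assert (A2 : 0 <= y * (t * Rpower t (y - 2)) - 2 * t).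
  { assert (t <= t * Rpower t (y-2)) by nra. nra. }
  pose proof (Rmult_le_pos _ _ A1 H0). pose proof (Rmult_le_pos _ _ A2 H1). lra.
Qed.

Lemma Z3 xi xi1 xi2 y : xiH xi xi1 xi2 -> forall t, 2 <= t -> Zf xi xi1 y t = y * (y - 1) * Rpower t (y - 2).
Proof.
  intros H t Ht. unfold Zf. rewrite (X2 _ _ _ H t) by lra. rewrite (X5 _ _ _ H t) by lra. ring.
Qed.

Lemma Z4 xi xi1 xi2 y : xiH xi xi1 xi2 -> 2 <= y -> forall t1 t2, 2 <= t1 <= t2 ->
  Zf xi xi1 y t1 <= Zf xi xi1 y t2.
Proof.
  intros H Hy t1 t2 Ht. rewrite (Z3 _ _ _ y H t1), (Z3 _ _ _ y H t2) by lra.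
  assert (Rpower t1 (y-2) <= Rpower t2 (y-2)) by (apply Rle_Rpower_l; lra).
  apply Rmult_le_compat_l; [nra|assumption].
Qed.

Definition K xi xi1 y R0 t := sqrt (Zf xi xi1 y (clamp R0 t)).

Lemma clamp_ge1 R0 t : 1 <= clamp R0 t.
Proof. unfold clamp, Rmax; destruct Rle_dec; lra. Qed.

Lemma K_cont xi xi1 xi2 y R0 t : xiH xi xi1 xi2 -> continuous (K xi xi1 y R0) t.
Proof.
  intros H. unfold K. apply continuous_sqrt_comp.
  apply (continuous_comp (clamp R0) (Zf xi xi1 y)).
  - apply clamp_cont.
  - apply (Zf_cont xi xi1 xi2); [exact H|]. pose proof (clamp_ge1 R0 t). lra.
Qed.

Lemma K_sq xi xi1 xi2 y R0 t : xiH xi xi1 xi2 -> 2 <= y -> (K xi xi1 y R0 t) ^ 2 = Zf xi xi1 y (clamp R0 t).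
Proof.
  intros H Hy. unfold K. simpl. rewrite Rmult_1_r. apply sqrt_sqrt.
  pose proof (Z2 _ _ _ y H Hy (clamp R0 t) (clamp_ge1 R0 t)). lra.
Qed.

Lemma K_ge xi xi1 xi2 y R0 t : xiH xi xi1 xi2 -> 2 <= y -> 2 <= (K xi xi1 y R0 t) ^ 2.
Proof.
  intros H Hy. rewrite (K_sq xi xi1 xi2) by auto. apply (Z2 _ _ _ y H Hy). apply clamp_ge1.
Qed.

Lemma K_pos xi xi1 y R0 t : 0 <= K xi xi1 y R0 t.
Proof. unfold K. apply sqrt_pos. Qed.

Lemma gR_K xi xi1 xi2 y R0 s : xiH xi xi1 xi2 -> 2 < R0 -> 0 <= s ->
  gR xi R0 s y = K xi xi1 y R0 s.
Proof.
  intros H HR Hs. unfold gR, K. f_equal.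
  destruct (Rle_lt_or_eq_dec 0 s Hs) as [Hs'|Hs'].
  - assert (Hm : 0 < Rmin s R0) by (unfold Rmin; destruct Rle_dec; lra).
    rewrite (pDx_pos _ _ (Zf xi xi1 y (Rmin s R0)) Hm).
    2:{ apply is_derive_Reals. apply (zeta_deriv xi xi1 xi2); auto. }
    unfold clamp. unfold Rmax. destruct Rle_dec as [Hl|Hl]; [reflexivity|].
    rewrite (Z1 _ _ _ y H) by lra. rewrite (Z1 _ _ _ y H) by lra. reflexivity.
  - subst s. rewrite (Rmin_left 0 R0) by lra.
    rewrite (pDx_zero _ 2).
    + unfold clamp. rewrite Rmin_left by lra. rewrite Rmax_left by lra.
      rewrite (Z1 _ _ _ y H) by lra. reflexivity.
    + intros eps Heps. exists 1. split; [lra|]. intros h Hh.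
      unfold zeta. rewrite (X1 _ _ _ H (0+h)) by lra. rewrite (X1 _ _ _ H 0) by lra.
      replace ((2 * (0 + h) + (y * rpow (0 + h) (y - 1) - 2 * (0 + h)) * 0 -
        (2 * 0 + (y * rpow 0 (y - 1) - 2 * 0) * 0)) / h - 2) with 0 by (field; lra).
      rewrite Rabs_R0; lra.
Qed.

Definition zt xi y t := if Rlt_dec 0 t then zeta xi t y else 2 * t.
Definition Zt xi xi1 y t := Zf xi xi1 y (Rmax 1 t).

Lemma zt_deriv xi xi1 xi2 y t : xiH xi xi1 xi2 -> is_derive (zt xi y) t (Zt xi xi1 y t).
Proof.
  intros H. unfold Zt.
  destruct (Rlt_or_le 0 t) as [Ht|Ht].
  - apply is_derive_ext_loc with (fun s => zeta xi s y).
    { apply loc_pos; [lra|]. intros s Hs. unfold zt. destruct Rlt_dec; [reflexivity|lra]. }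
    unfold Rmax. destruct Rle_dec as [Hl|Hl].
    + apply (zeta_deriv xi xi1 xi2); auto.
    + replace (Zf xi xi1 y 1) with (Zf xi xi1 y t). apply (zeta_deriv xi xi1 xi2); auto.
      rewrite !(Z1 _ _ _ y H) by lra. reflexivity.
  - apply is_derive_ext_loc with (fun s => 2 * s).
    { apply (loc_lt _ t 1); [lra|]. intros s Hs. unfold zt. destruct Rlt_dec; [|reflexivity].
      cbv beta. unfold zeta. rewrite (X1 _ _ _ H s) by lra. rewrite Rmult_0_r, Rplus_0_r; reflexivity. }
    rewrite Rmax_left by lra. rewrite (Z1 _ _ _ y H) by lra.
    auto_derive; auto; ring.
Qed.

Lemma Zt_cont xi xi1 xi2 y t : xiH xi xi1 xi2 -> continuous (Zt xi xi1 y) t.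
Proof.
  intros H. unfold Zt.
  apply (continuous_comp (Rmax 1) (Zf xi xi1 y)).
  - apply Rmax1_cont.
  - apply (Zf_cont xi xi1 xi2); [exact H|]. unfold Rmax; destruct Rle_dec; lra.
Qed.

Lemma pow2_le t : 0 <= t <= 1 -> Rpower 2 t <= 1 + t.
Proof.
  intros Ht.
  destruct (Rle_or_lt (Rpower 2 t) (1 + t)) as [|Hlt]; [assumption|exfalso].
  assert (Ht0 : 0 < t) by (destruct (Req_dec t 0); [subst; rewrite Rpower_O in Hlt; lra|lra]).
  assert (Ht1 : t < 1) by (destruct (Req_dec t 1); [subst; rewrite Rpower_1 in Hlt; lra|lra]).
  set (f := fun u => 1 + u - exp (u * ln 2)).
  set (f' := fun u => 1 - ln 2 * exp (u * ln 2)).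
  assert (Df : forall c, derivable_pt_lim f c (f' c)).
  { intros c. apply is_derive_Reals. unfold f, f'. auto_derive; auto. ring. }
  assert (Hl2 : 0 < ln 2) by (rewrite <- ln_1; apply ln_increasing; lra).
  assert (F0 : f 0 = 0) by (unfold f; rewrite Rmult_0_l, exp_0; ring).
  assert (F1 : f 1 = 0) by (unfold f; rewrite Rmult_1_l, exp_ln by lra; ring).
  assert (Ft : f t < 0) by (unfold f, Rpower in *; lra).
  destruct (MVT_cor2 f f' 0 t Ht0 (fun c _ => Df c)) as [c1 [E1 H1]].
  destruct (MVT_cor2 f f' t 1 Ht1 (fun c _ => Df c)) as [c2 [E2 H2]].
  assert (exp (c1 * ln 2) < exp (c2 * ln 2)) by (apply exp_increasing; nra).
  assert (f' c1 < 0) by nra.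
  assert (0 < f' c2) by nra.
  unfold f' in *. nra.
Qed.

Lemma Rpower_cont p t : 0 < t -> continuous (fun s => Rpower s p) t.
Proof.
  intros Ht. apply (ex_derive_continuous (fun s => Rpower s p)).
  eexists. apply Rpower_deriv. auto.
Qed.

Lemma pow_int p e x : 0 <= p -> 0 < e <= x ->
  RInt (fun s => Rpower s p) e x = (Rpower x (p + 1) - Rpower e (p + 1)) / (p + 1).
Proof.
  intros Hp He. apply is_RInt_unique.
  assert (H := is_RInt_derive (fun s => Rpower s (p+1) / (p+1)) (fun s => Rpower s p) e x).
  rewrite Rmin_left in H by lra. rewrite Rmax_right in H by lra.
  replace ((Rpower x (p + 1) - Rpower e (p + 1)) / (p + 1)) with
    (minus (Rpower x (p + 1) / (p + 1)) (Rpower e (p + 1) / (p + 1))).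
  2:{ unfold minus, plus, opp; simpl. field. lra. }
  apply H.
  - intros s Hs. assert (D := Rpower_deriv s (p+1) ltac:(lra)).
    auto_derive.
    + eexists; exact D.
    + replace (Derive (fun x : R => Rpower x (p + 1)) s) with ((p + 1) * Rpower s (p + 1 - 1))
        by (symmetry; apply is_derive_unique; exact D).
      replace (p + 1 - 1) with p by ring. field. lra.
  - intros s Hs. apply Rpower_cont. lra.
Qed.

Lemma cont_ex (f : R -> R) a b : (forall t, continuous f t) -> ex_RInt f a b.
Proof. intros H. apply (ex_RInt_continuous (V := R_CompleteNormedModule) f). intros; apply H. Qed.

Lemma RInt_ge0 (f : R -> R) a b : a <= b -> ex_RInt f a b ->
  (forall t, a < t < b -> 0 <= f t) -> 0 <= RInt f a b.
Proof.
  intros Hab Hf Hp. replace 0 with (RInt (fun _ => 0) a b).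
  - apply RInt_le; auto. apply ex_RInt_const.
  - rewrite RInt_const. unfold scal; simpl; unfold mult; simpl. ring.
Qed.

Lemma RInt_const' a b c : RInt (fun _ => c) a b = c * (b - a).
Proof. rewrite RInt_const. unfold scal; simpl; unfold mult; simpl. ring. Qed.

Lemma RInt_scal' (f : R -> R) a b l : ex_RInt f a b -> RInt (fun x => l * f x) a b = l * RInt f a b.
Proof. intros H. apply (RInt_scal f a b l H). Qed.

Lemma LB (f : R -> R) A p x :
  (forall t, continuous f t) -> 0 <= A -> 0 <= p -> 0 < x ->
  (forall t, 0 <= t <= x -> 0 <= f t) ->
  (forall s, 0 < s <= x -> A * Rpower s p <= f s) ->
  A * Rpower x (1 + p) <= (1 + p) * RInt f 0 x.
Proof.
  intros Hc HA Hp Hx Hf Hb.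
  assert (Key : forall e, 0 < e <= x ->
    A * Rpower x (1 + p) - e * (A * Rpower x p) <= (1 + p) * RInt f 0 x).
  { intros e He.
    rewrite <- (RInt_Chasles f 0 e x) by (apply cont_ex; auto).
    change (plus (RInt f 0 e) (RInt f e x)) with (RInt f 0 e + RInt f e x).
    assert (I1 : 0 <= RInt f 0 e) by (apply RInt_ge0; [lra|apply cont_ex; auto|intros; apply Hf; lra]).
    assert (I2 : RInt (fun s => A * Rpower s p) e x <= RInt f e x).
    { apply RInt_le; [lra| |apply cont_ex; auto|].
      - apply (ex_RInt_continuous (V := R_CompleteNormedModule)). intros z Hz.
        rewrite Rmin_left in Hz by lra.
        apply (continuous_mult (fun _ => A) (fun s => Rpower s p)); [apply continuous_const|].
        apply Rpower_cont. lra.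
      - intros t Ht. apply Hb. lra. }
    rewrite RInt_scal' in I2.
    2:{ apply (ex_RInt_continuous (V := R_CompleteNormedModule)). intros z Hz. rewrite Rmin_left in Hz by lra. apply Rpower_cont. lra. }
    rewrite pow_int in I2 by lra.
    assert (E1 : Rpower e (p + 1) <= e * Rpower x p).
    { rewrite Rpower_succ by lra. apply Rmult_le_compat_l; [lra|]. apply Rle_Rpower_l; lra. }
    replace (1 + p) with (p + 1) by ring.
    assert (0 <= A * (Rpower e (p+1))) by (apply Rmult_le_pos; [lra|]; unfold Rpower; left; apply exp_pos).
    assert (A * ((Rpower x (p + 1) - Rpower e (p + 1)) / (p + 1)) * (p + 1) =
            A * Rpower x (p + 1) - A * Rpower e (p + 1)) by (field; lra).
    nra. }
  destruct (Rle_or_lt (A * Rpower x (1 + p)) ((1 + p) * RInt f 0 x)) as [|Hlt]; [assumption|exfalso].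
  set (g := A * Rpower x (1 + p) - (1 + p) * RInt f 0 x) in *.
  set (B := A * Rpower x p + 1).
  assert (HB : 0 < B) by (unfold B; assert (0 < Rpower x p) by (unfold Rpower; apply exp_pos); nra).
  set (e := Rmin x (g / (2 * B))).
  assert (He1 : 0 < e) by (unfold e, Rmin; destruct Rle_dec; [lra|]; apply Rdiv_lt_0_compat; unfold g; lra).
  assert (He2 : e <= x) by (unfold e; apply Rmin_l).
  assert (He3 : e <= g / (2 * B)) by (unfold e; apply Rmin_r).
  specialize (Key e (conj He1 He2)).
  assert (e * B <= g / 2).
  { apply Rmult_le_compat_r with (r := B) in He3; [|lra].
    replace (g / (2 * B) * B) with (g / 2) in He3 by (field; lra). lra. }
  unfold B in *. unfold g in *. assert (0 <= e * (A * Rpower x p)) by (assert (0 < Rpower x p) by (unfold Rpower; apply exp_pos); nra).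
  nra.
Qed.

Definition KP (k : R -> R) (d : R) : Prop :=
  (forall t, continuous k t) /\ (forall t, 0 <= k t) /\ (forall t, 2 <= k t ^ 2) /\
  (forall t, t <= 1 -> k t ^ 2 = 2) /\
  (forall x1 x2, 0 < x1 -> x1 <= x2 -> k x2 * Rpower x2 (- d) <= k x1 * Rpower x1 (- d)) /\
  (forall s x, 2 <= s <= x -> k s <= k x).

Definition rho (k : R -> R) t := RInt k 0 t.
Definition Hk (k : R -> R) t := RInt (fun s => k s ^ 2) 0 t.
Definition Phi (k : R -> R) t := RInt (Hk k) 0 t.

Lemma k2_cont (k : R -> R) (t : R) : (forall t : R, continuous k t) -> continuous (fun s : R => k s ^ 2) t.
Proof.
  intros Hc. apply continuous_ext with (fun s => mult (k s) (k s)).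
  { intros; unfold mult; simpl; ring. }
  apply (continuous_mult k k); apply Hc.
Qed.

Lemma Rpower_pos s a : 0 < Rpower s a.
Proof. unfold Rpower; apply exp_pos. Qed.

Lemma KD2 k d : KP k d -> forall s x, 0 < s <= x ->
  k x * Rpower x (- d) * Rpower s d <= k s.
Proof.
  intros [_ [_ [_ [_ [HN _]]]]] s x Hs.
  specialize (HN s x ltac:(lra) ltac:(lra)).
  pose proof (Rpower_pos s d).
  apply Rmult_le_compat_r with (r := Rpower s d) in HN; [|lra].
  rewrite (Rmult_assoc (k s)), <- Rpower_plus in HN. replace (- d + d) with 0 in HN by ring.
  rewrite Rpower_O in HN by lra. lra.
Qed.

Lemma sqrt2_le k d : KP k d -> forall t, sqrt 2 <= k t.
Proof.
  intros [_ [Hp [H2 _]]] t. rewrite <- (sqrt_pow2 (k t)) by auto. apply sqrt_le_1_alt. auto.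
Qed.

Lemma L_i k d x : KP k d -> 0 < d -> 0 <= x -> x * k x <= (1 + d) * rho k x.
Proof.
  intros HK Hd Hx. pose proof HK as [Hc [Hp _]].
  destruct (Rle_lt_or_eq_dec 0 x Hx) as [Hx'|<-].
  2:{ unfold rho. rewrite RInt_point. unfold zero; simpl. lra. }
  assert (E : k x * Rpower x (- d) * Rpower x (1 + d) = x * k x).
  { rewrite Rmult_assoc, <- Rpower_plus. replace (-d + (1 + d)) with 1 by ring.
    rewrite Rpower_1 by lra. ring. }
  rewrite <- E. unfold rho. apply LB; auto; try lra.
  - pose proof (Rpower_pos x (-d)). specialize (Hp x). nra.
  - intros s Hs. apply (KD2 k d HK). lra.
Qed.

Lemma L_ii k d x : KP k d -> 0 < d -> 0 <= x -> x * k x ^ 2 <= (1 + 2 * d) * Hk k x.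
Proof.
  intros HK Hd Hx. pose proof HK as [Hc [Hp _]].
  destruct (Rle_lt_or_eq_dec 0 x Hx) as [Hx'|<-].
  2:{ unfold Hk. rewrite RInt_point. unfold zero; simpl. lra. }
  assert (E : (k x * Rpower x (- d)) ^ 2 * Rpower x (1 + 2 * d) = x * k x ^ 2).
  { replace ((k x * Rpower x (- d)) ^ 2 * Rpower x (1 + 2 * d)) with
      (k x ^ 2 * (Rpower x (- d) * Rpower x (- d) * Rpower x (1 + 2 * d))) by ring.
    rewrite <- !Rpower_plus. replace (-d + - d + (1 + 2 * d)) with 1 by ring.
    rewrite Rpower_1 by lra. ring. }
  rewrite <- E. unfold Hk. apply LB; auto; try lra.
  - intros; apply k2_cont; auto.
  - apply pow2_ge_0.
  - intros t _; apply pow2_ge_0.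
  - intros s Hs. pose proof (KD2 k d HK s x ltac:(lra)).
    pose proof (Rpower_pos x (-d)). pose proof (Rpower_pos s d). pose proof (Hp x).
    replace (2 * d) with (d + d) by ring. rewrite Rpower_plus.
    replace ((k x * Rpower x (- d)) ^ 2 * (Rpower s d * Rpower s d)) with
      ((k x * Rpower x (- d) * Rpower s d) ^ 2) by ring.
    assert (0 <= k x * Rpower x (- d) * Rpower s d) by (apply Rmult_le_pos; [apply Rmult_le_pos|]; lra).
    apply pow_incr. lra.
Qed.

Lemma KD3 k d : KP k d -> 0 < d < 1/2 -> forall s, s <= 2 -> k s ^ 2 <= 2 * (1 + 2 * d).
Proof.
  intros HK Hd s Hs. pose proof HK as [Hc [Hp [H2 [H1 [HN _]]]]].
  destruct (Rle_or_lt s 1) as [Hs1|Hs1]. { rewrite H1 by auto. lra. }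
  specialize (HN 1 s ltac:(lra) ltac:(lra)).
  assert (R1 : Rpower 1 (- d) = 1) by (unfold Rpower; rewrite ln_1, Rmult_0_r, exp_0; reflexivity).
  rewrite R1 in HN.
  pose proof (Rpower_pos s d).
  apply Rmult_le_compat_r with (r := Rpower s d) in HN; [|lra].
  rewrite (Rmult_assoc (k s)), <- Rpower_plus in HN. replace (- d + d) with 0 in HN by ring.
  rewrite Rpower_O in HN by lra. rewrite !Rmult_1_r in HN.
  assert (B1 : Rpower s d <= Rpower 2 d) by (apply Rle_Rpower_l; lra).
  assert (B2 : Rpower 2 d * Rpower 2 d <= 1 + 2 * d).
  { rewrite <- Rpower_plus. replace (d + d) with (2 * d) by ring. apply pow2_le. lra. }
  assert (Q : k s ^ 2 <= (k 1 * Rpower s d) ^ 2) by (apply pow_incr; split; [apply Hp|lra]).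
  replace ((k 1 * Rpower s d) ^ 2) with (k 1 ^ 2 * (Rpower s d * Rpower s d)) in Q by ring.
  rewrite (H1 1) in Q by lra.
  assert (Rpower s d * Rpower s d <= Rpower 2 d * Rpower 2 d) by (apply Rmult_le_compat; lra).
  lra.
Qed.

Lemma KM1 k d : KP k d -> 0 < d < 1/2 -> forall s x, 0 <= s <= x ->
  k s <= Rmax (sqrt (2 * (1 + 2 * d))) (k x).
Proof.
  intros HK Hd s x Hs. pose proof HK as [Hc [Hp [H2 [H1 [HN HM]]]]].
  destruct (Rle_or_lt s 2) as [Hs2|Hs2].
  - eapply Rle_trans; [|apply Rmax_l].
    rewrite <- (sqrt_pow2 (k s)) by auto. apply sqrt_le_1_alt. apply (KD3 k d); auto.
  - eapply Rle_trans; [|apply Rmax_r]. apply HM. lra.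
Qed.

Lemma KM2 k d : KP k d -> 0 < d < 1/2 -> forall s x, 0 <= s <= x ->
  k s ^ 2 <= k x ^ 2 + 4 * d.
Proof.
  intros HK Hd s x Hs. pose proof HK as [Hc [Hp [H2 [H1 [HN HM]]]]].
  destruct (Rle_or_lt s 2) as [Hs2|Hs2].
  - pose proof (KD3 k d HK Hd s Hs2). specialize (H2 x). lra.
  - assert (k s <= k x) by (apply HM; lra). pose proof (Hp s).
    assert (k s ^ 2 <= k x ^ 2) by (apply pow_incr; lra). lra.
Qed.

Lemma k_ex (k : R -> R) a b : (forall t : R, continuous k t) -> ex_RInt k a b.
Proof. intros; apply cont_ex; auto. Qed.
Lemma k2_ex (k : R -> R) a b : (forall t : R, continuous k t) -> ex_RInt (fun s => k s ^ 2) a b.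
Proof. intros; apply cont_ex; intros; apply k2_cont; auto. Qed.

Lemma rho_ge k d x : KP k d -> 0 <= x -> sqrt 2 * x <= rho k x.
Proof.
  intros HK Hx. pose proof HK as [Hc _]. unfold rho.
  replace (sqrt 2 * x) with (sqrt 2 * (x - 0)) by ring. rewrite <- (RInt_const' 0 x (sqrt 2)).
  apply RInt_le; auto. apply ex_RInt_const. apply k_ex; auto.
  intros; apply (sqrt2_le k d HK).
Qed.

Lemma Hk_ge k d x : KP k d -> 0 <= x -> 2 * x <= Hk k x.
Proof.
  intros HK Hx. pose proof HK as [Hc [_ [H2 _]]]. unfold Hk.
  replace (2 * x) with (2 * (x - 0)) by ring. rewrite <- (RInt_const' 0 x 2).
  apply RInt_le; auto. apply ex_RInt_const. apply k2_ex; auto.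
Qed.

Lemma Hk_le_rho k d x M : KP k d -> 0 <= x -> (forall s, 0 <= s <= x -> k s <= M) ->
  Hk k x <= M * rho k x.
Proof.
  intros HK Hx HM. pose proof HK as [Hc [Hp _]]. unfold Hk, rho.
  rewrite <- RInt_scal' by (apply k_ex; auto).
  apply RInt_le; auto. apply k2_ex; auto.
  apply cont_ex. intros t. apply (continuous_mult (fun _ => M) k); [apply continuous_const|apply Hc].
  intros s Hs. specialize (HM s ltac:(lra)). specialize (Hp s). simpl. nra.
Qed.

Lemma rho_le k d x M : KP k d -> 0 <= x -> (forall s, 0 <= s <= x -> k s <= M) ->
  rho k x <= M * x.
Proof.
  intros HK Hx HM. pose proof HK as [Hc [Hp _]]. unfold rho.
  replace (M * x) with (M * (x - 0)) by ring. rewrite <- (RInt_const' 0 x M).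
  apply RInt_le; auto. apply k_ex; auto. apply ex_RInt_const.
  intros; apply HM; lra.
Qed.

Lemma Hk_le k d x : KP k d -> 0 < d < 1/2 -> 0 <= x -> Hk k x <= x * k x ^ 2 + 4 * d * x.
Proof.
  intros HK Hd Hx. pose proof HK as [Hc [Hp _]]. unfold Hk.
  replace (x * k x ^ 2 + 4 * d * x) with ((k x ^ 2 + 4 * d) * (x - 0)) by ring. rewrite <- (RInt_const' 0 x (k x ^ 2 + 4 * d)).
  apply RInt_le; auto. apply k2_ex; auto. apply ex_RInt_const.
  intros s Hs; apply (KM2 k d); auto; lra.
Qed.

Lemma c_bound d : 0 < d -> sqrt (2 * (1 + 2 * d)) <= sqrt 2 * (1 + d).
Proof.
  intros Hd. rewrite <- (sqrt_pow2 (1 + d)) by lra. rewrite <- sqrt_mult by nra.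
  apply sqrt_le_1_alt. nra.
Qed.

Lemma L_iii k d x : KP k d -> 0 < d < 1/2 -> 0 <= x ->
  x * Hk k x <= (1 + d) ^ 2 * rho k x ^ 2.
Proof.
  intros HK Hd Hx. pose proof HK as [Hc [Hp _]].
  set (c := sqrt (2 * (1 + 2 * d))).
  assert (HM := Hk_le_rho k d x (Rmax c (k x)) HK Hx (fun s Hs => KM1 k d HK Hd s x Hs)).
  pose proof (rho_ge k d x HK Hx) as Hr.
  pose proof (L_i k d x HK ltac:(lra) Hx) as Hi.
  pose proof (sqrt_lt_R0 2 ltac:(lra)) as Hs2.
  assert (Hr0 : 0 <= rho k x) by nra.
  unfold Rmax in HM. destruct Rle_dec.
  - assert (x * Hk k x <= x * k x * rho k x) by (apply Rmult_le_compat_l with (r := x) in HM; lra).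
    assert (x * k x * rho k x <= (1 + d) * rho k x * rho k x) by (apply Rmult_le_compat_r; lra).
    assert ((1 + d) * rho k x * rho k x <= (1 + d) ^ 2 * rho k x ^ 2) by nra.
    lra.
  - pose proof (c_bound d ltac:(lra)). fold c in H.
    assert (x * Hk k x <= x * c * rho k x) by (apply Rmult_le_compat_l with (r := x) in HM; lra).
    assert (x * c <= x * (sqrt 2 * (1 + d))) by (apply Rmult_le_compat_l; lra).
    assert (x * c * rho k x <= (1 + d) * rho k x * rho k x).
    { apply Rmult_le_compat_r; [lra|]. nra. }
    assert ((1 + d) * rho k x * rho k x <= (1 + d) ^ 2 * rho k x ^ 2) by nra.
    lra.
Qed.

Lemma L_iv k d x : KP k d -> 0 < d < 1/2 -> 0 <= x ->
  x * k x ^ 2 - Hk k x <= 2 * d * (1 + d) / (1 + 2 * d) * rho k x * k x.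
Proof.
  intros HK Hd Hx. pose proof HK as [Hc [Hp _]].
  pose proof (L_i k d x HK ltac:(lra) Hx) as Hi.
  pose proof (L_ii k d x HK ltac:(lra) Hx) as Hii.
  assert (Hkx := Hp x).
  assert (E : Hk k x >= x * k x ^ 2 / (1 + 2 * d)).
  { apply Rle_ge. apply Rmult_le_reg_l with (1 + 2 * d); [lra|]. field_simplify; lra. }
  assert (x * k x ^ 2 - Hk k x <= 2 * d / (1 + 2 * d) * (x * k x ^ 2)).
  { assert (x * k x ^ 2 - x * k x ^ 2 / (1 + 2 * d) = 2 * d / (1 + 2 * d) * (x * k x ^ 2)) by (field; lra). lra. }
  assert (x * k x ^ 2 <= (1 + d) * rho k x * k x) by (replace (x * k x ^ 2) with ((x * k x) * k x) by ring; apply Rmult_le_compat_r; lra).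
  assert (0 <= 2 * d / (1 + 2 * d)) by (apply Rdiv_le_0_compat; lra).
  replace (2 * d * (1 + d) / (1 + 2 * d) * rho k x * k x) with (2 * d / (1 + 2 * d) * ((1 + d) * rho k x * k x)) by (field; lra).
  assert (2 * d / (1 + 2 * d) * (x * k x ^ 2) <= 2 * d / (1 + 2 * d) * ((1 + d) * rho k x * k x)) by (apply Rmult_le_compat_l; lra).
  lra.
Qed.

Lemma rho_deriv (k : R -> R) (t : R) : (forall t : R, continuous k t) -> is_derive (rho k) t (k t).
Proof.
  intros Hc. apply is_derive_RInt with 0; [|apply Hc].
  apply filter_forall. intros b. exact (RInt_correct _ _ _ (k_ex k 0 b Hc)).
Qed.

Lemma Hk_deriv (k : R -> R) (t : R) : (forall t : R, continuous k t) -> is_derive (Hk k) t (k t ^ 2).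
Proof.
  intros Hc. apply (is_derive_RInt (fun s => k s ^ 2)) with 0; [|apply k2_cont; auto].
  apply filter_forall. intros b. unfold Hk. exact (RInt_correct _ _ _ (k2_ex k 0 b Hc)).
Qed.

Lemma Hk_cont (k : R -> R) (t : R) : (forall t : R, continuous k t) -> continuous (Hk k) t.
Proof. intros Hc. apply (ex_derive_continuous (Hk k)). eexists. apply Hk_deriv; auto. Qed.

Lemma Phi_deriv (k : R -> R) (t : R) : (forall t : R, continuous k t) -> is_derive (Phi k) t (Hk k t).
Proof.
  intros Hc. apply (is_derive_RInt (Hk k)) with 0; [|apply Hk_cont; auto].
  apply filter_forall. intros b. unfold Phi. exact (RInt_correct _ _ _ (cont_ex (Hk k) 0 b (fun t => Hk_cont k t Hc))).
Qed.

Lemma pt_v k d t : KP k d -> 0 < d < 1/2 -> 0 <= t -> rho k t * k t <= (1 + 2 * d) * Hk k t.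
Proof.
  intros HK Hd Ht. pose proof HK as [Hc [Hp _]].
  set (c := sqrt (2 * (1 + 2 * d))).
  assert (Hr := rho_le k d t (Rmax c (k t)) HK Ht (fun s Hs => KM1 k d HK Hd s t Hs)).
  pose proof (L_ii k d t HK ltac:(lra) Ht) as Hii.
  pose proof (Hk_ge k d t HK Ht) as Hg.
  assert (Hkt := Hp t).
  unfold Rmax in Hr. destruct Rle_dec as [Hl|Hl].
  - assert (rho k t * k t <= k t * t * k t) by (apply Rmult_le_compat_r; lra).
    nra.
  - assert (Hc2 : c * c = 2 * (1 + 2 * d)) by (unfold c; apply sqrt_sqrt; lra).
    assert (rho k t * k t <= c * t * k t) by (apply Rmult_le_compat_r; lra).
    assert (c * t * k t <= c * t * c) by (apply Rmult_le_compat_l; [apply Rmult_le_pos; [unfold c; apply sqrt_pos|lra]|lra]).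
    nra.
Qed.

Lemma L_va k d x : KP k d -> 0 < d < 1/2 -> 0 <= x ->
  rho k x ^ 2 <= 2 * (1 + 2 * d) * Phi k x.
Proof.
  intros HK Hd Hx. pose proof HK as [Hc _].
  destruct (Rle_lt_or_eq_dec 0 x Hx) as [Hx'|<-].
  2:{ unfold rho, Phi. rewrite !RInt_point. unfold zero; simpl. lra. }
  set (F := fun t => 2 * (1 + 2 * d) * Phi k t - rho k t * rho k t).
  set (F' := fun t => 2 * (1 + 2 * d) * Hk k t - 2 * rho k t * k t).
  assert (DF : forall t, derivable_pt_lim F t (F' t)).
  { intros t. apply is_derive_Reals.
    assert (D1 := Phi_deriv k t Hc). assert (D2 := rho_deriv k t Hc).
    unfold F, F'. auto_derive.
    - repeat first [exact I | split | (eexists; eassumption)].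
    - replace (Derive (fun x : R => Phi k x) t) with (Hk k t) by (symmetry; apply is_derive_unique; exact D1).
      replace (Derive (fun x : R => rho k x) t) with (k t) by (symmetry; apply is_derive_unique; exact D2).
      ring. }
  destruct (MVT_cor2 F F' 0 x Hx' (fun c _ => DF c)) as [c [E Hc']].
  assert (F0 : F 0 = 0) by (unfold F, rho, Phi; rewrite !RInt_point; unfold zero; simpl; ring).
  assert (0 <= F' c) by (unfold F'; pose proof (pt_v k d c HK Hd ltac:(lra)); lra).
  assert (0 <= F x) by nra.
  unfold F in *. simpl. lra.
Qed.

Lemma L_vb k d x (z Z : R -> R) : KP k d -> 0 <= x ->
  (forall t, is_derive z t (Z t)) -> (forall t : R, continuous Z t) -> z 0 = 0 ->
  (forall t, 0 <= t -> k t ^ 2 <= Z t) ->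
  Phi k x <= RInt z 0 x.
Proof.
  intros HK Hx Dz Cz z0 Hle. pose proof HK as [Hc _].
  unfold Phi. apply RInt_le; auto.
  - apply cont_ex; intros; apply Hk_cont; auto.
  - apply cont_ex; intros t. apply (ex_derive_continuous z). eexists; apply Dz.
  - intros s Hs. unfold Hk.
    assert (E : RInt Z 0 s = z s).
    { apply is_RInt_unique.
      replace (z s) with (minus (z s) (z 0)) by (rewrite z0; unfold minus, plus, opp, zero; simpl; ring).
      exact (is_RInt_derive z Z 0 s (fun t _ => Dz t) (fun t _ => Cz t)). }
    rewrite <- E. apply RInt_le; [lra|apply k2_ex; auto|apply cont_ex; auto|].
    intros; apply Hle; lra.
Qed.

Lemma L_vi k d x : KP k d -> 0 < d < 1/2 -> 0 < x ->
  exists L, is_derive (fun s => sqrt (s * Hk k s)) x L /\ L ^ 2 <= (1 + 2 * d) * k x ^ 2.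
Proof.
  intros HK Hd Hx. pose proof HK as [Hc [Hp [H2 _]]].
  pose proof (Hk_ge k d x HK ltac:(lra)) as Hg.
  pose proof (L_ii k d x HK ltac:(lra) ltac:(lra)) as Hii.
  pose proof (Hk_le k d x HK Hd ltac:(lra)) as Hl.
  set (h := Hk k x) in *. set (a := x * k x ^ 2) in *.
  assert (Ha : 2 * x <= a) by (unfold a; specialize (H2 x); nra).
  assert (Hxh : 0 < x * h) by nra.
  exists ((h + a) / (2 * sqrt (x * h))). split.
  - apply (is_derive_sqrt (fun s => s * Hk k s) x (h + a)); [|exact Hxh].
    assert (D := Hk_deriv k x Hc).
    auto_derive.
    + repeat first [exact I | split | (eexists; eassumption)].
    + replace (Derive (fun x : R => Hk k x) x) with (k x ^ 2) by (symmetry; apply is_derive_unique; exact D).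
      unfold h, a. ring.
  - assert (Hq : sqrt (x * h) * sqrt (x * h) = x * h) by (apply sqrt_sqrt; lra).
    assert (Hq0 : 0 < sqrt (x * h)) by (apply sqrt_lt_R0; lra).
    assert (Key : (h + a) ^ 2 <= 4 * (1 + 2 * d) * h * a).
    { destruct (Rle_or_lt h a).
      - assert (a - h <= 2 * d * h) by lra. nra.
      - assert (h - a <= 4 * d * x) by lra. nra. }
    assert (EQ : ((h + a) / (2 * sqrt (x * h))) ^ 2 = (h + a) ^ 2 / (4 * (sqrt (x * h) * sqrt (x * h)))) by (field; lra).
    rewrite EQ, Hq.
    apply Rmult_le_reg_r with (4 * (x * h)); [lra|].
    unfold Rdiv. rewrite Rmult_assoc, Rinv_l by lra. rewrite Rmult_1_r.
    replace ((1 + 2 * d) * k x ^ 2 * (4 * (x * h))) with (4 * (1 + 2 * d) * h * a) by (unfold a; ring). exact Key.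
Qed.

Lemma clamp_mono R0 s x : s <= x -> clamp R0 s <= clamp R0 x.
Proof. intros. unfold clamp, Rmax, Rmin; repeat destruct Rle_dec; lra. Qed.

Lemma KP_K xi xi1 xi2 y R0 delta : xiH xi xi1 xi2 -> 2 <= y -> 2 < R0 ->
  (forall x1 x2, 0 < x1 -> x1 <= x2 ->
       gR xi R0 x2 y * Rpower x2 (- delta) <= gR xi R0 x1 y * Rpower x1 (- delta)) ->
  KP (K xi xi1 y R0) delta.
Proof.
  intros H Hy HR HN. split; [|split; [|split; [|split; [|split]]]].
  - intros t. apply (K_cont xi xi1 xi2); auto.
  - intros t. apply K_pos.
  - intros t. apply (K_ge xi xi1 xi2); auto.
  - intros t Ht. rewrite (K_sq xi xi1 xi2) by auto.
    unfold clamp. rewrite Rmax_left by (unfold Rmin; destruct Rle_dec; lra).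
    apply (Z1 _ _ _ y H). lra.
  - intros x1 x2 H1 H2. rewrite <- (gR_K xi xi1 xi2 y R0 x1), <- (gR_K xi xi1 xi2 y R0 x2) by (try assumption; lra). apply HN; lra.
  - intros s x Hs. unfold K. apply sqrt_le_1_alt. apply (Z4 xi xi1 xi2); auto.
    split; [|apply clamp_mono; lra]. unfold clamp, Rmax, Rmin; repeat destruct Rle_dec; lra.
Qed.

Lemma K_le_Zt xi xi1 xi2 y R0 t : xiH xi xi1 xi2 -> 2 <= y -> 2 < R0 -> 0 <= t ->
  K xi xi1 y R0 t ^ 2 <= Zt xi xi1 y t.
Proof.
  intros H Hy HR Ht. rewrite (K_sq xi xi1 xi2) by auto. unfold Zt, clamp.
  destruct (Rle_or_lt t R0).
  - rewrite Rmin_left by lra. lra.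
  - rewrite Rmin_right by lra. rewrite (Rmax_right 1 R0) by lra. rewrite (Rmax_right 1 t) by lra.
    apply (Z4 xi xi1 xi2); auto; lra.
Qed.

Theorem mainTheorem20 (xi : R -> R)
  (Hxi_C2 : C2_pos xi)
  (Hxi_mono : forall a b, 0 <= a -> a <= b -> xi a <= xi b)
  (Hxi_low : forall x, 0 <= x <= 3/2 -> xi x = Rmax ((x - 1) ^ 3) 0)
  (Hxi_high : forall x, 2 <= x -> xi x = 1)
  (delta y0 : R) (Hdelta : 0 < delta < 1/2) (Hy0 : 2 < y0)
  (Hnoninc : forall y R0, 2 <= y <= y0 -> 2 < R0 ->
     forall x1 x2, 0 < x1 -> x1 <= x2 ->
       gR xi R0 x2 y * Rpower x2 (- delta) <= gR xi R0 x1 y * Rpower x1 (- delta)) :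
  forall R0 x y, 2 < R0 -> 0 <= x -> 2 <= y <= y0 ->
    x * gR xi R0 x y <= (1 + delta) * rhoR xi R0 x y /\
    x * (gR xi R0 x y) ^ 2 <= (1 + 2 * delta) * hR xi R0 x y /\
    x * hR xi R0 x y <= (1 + delta) ^ 2 * (rhoR xi R0 x y) ^ 2 /\
    x * (gR xi R0 x y) ^ 2 - hR xi R0 x y
      <= 2 * delta * (1 + delta) / (1 + 2 * delta) * rhoR xi R0 x y * gR xi R0 x y /\
    ((rhoR xi R0 x y) ^ 2 <= 2 * (1 + 2 * delta) * phiR xi R0 x y /\
     2 * (1 + 2 * delta) * phiR xi R0 x y <= 2 * (1 + 2 * delta) * tau xi x y) /\
    (pDx (fun s => psiR xi R0 s y) x) ^ 2 <= (1 + 2 * delta) * (gR xi R0 x y) ^ 2.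
Proof.
  intros R0 x y HR Hx Hy.
  destruct Hxi_C2 as [xi1 [xi2 Hc2]].
  assert (H : xiH xi xi1 xi2).
  { split; [|split; [|split]]; auto; intros t Ht; destruct (Hc2 t Ht) as [A1 [A2 _]]; auto. }
  assert (Hy2 : 2 <= y) by lra.
  assert (HK : KP (K xi xi1 y R0) delta).
  { apply (KP_K xi xi1 xi2); auto. }
  set (k := K xi xi1 y R0) in *.
  pose proof HK as [Hc [Hp [H2 [H1 _]]]].
  assert (EG : forall s, 0 <= s -> gR xi R0 s y = k s) by (intros; apply (gR_K xi xi1 xi2); auto).
  assert (Erho : rhoR xi R0 x y = rho k x).
  { unfold rhoR, rho. apply integral_RInt; auto. intros; apply EG; lra. apply k_ex; auto. }
  assert (Eh : forall s, 0 <= s -> hR xi R0 s y = Hk k s).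
  { intros s Hs. unfold hR, Hk. apply integral_RInt; auto. intros; rewrite EG by lra; auto.
    apply k2_ex; auto. }
  assert (Ephi : phiR xi R0 x y = Phi k x).
  { unfold phiR, Phi. apply integral_RInt; auto. intros; apply Eh; lra.
    apply cont_ex; intros; apply Hk_cont; auto. }
  assert (Etau : tau xi x y = RInt (zt xi y) 0 x).
  { unfold tau. apply integral_RInt; auto.
    - intros s Hs. cbv beta. unfold zt. destruct Rlt_dec; [reflexivity|].
      assert (s = 0) by lra. subst s. cbv beta. unfold zeta. rewrite (X1 _ _ _ H 0) by lra. rewrite !Rmult_0_r, Rplus_0_r; reflexivity.
    - apply cont_ex. intros t. apply (ex_derive_continuous (zt xi y)). eexists.
      apply (zt_deriv xi xi1 xi2); auto. }
  rewrite (EG x Hx), Erho, (Eh x Hx), Ephi, Etau.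
  split; [apply L_i; auto; lra|].
  split; [apply L_ii; auto; lra|].
  split; [apply L_iii; auto|].
  split; [apply L_iv; auto|].
  split; [split|].
  { apply L_va; auto. }
  { apply Rmult_le_compat_l; [lra|]. apply (L_vb k delta x (zt xi y) (Zt xi xi1 y)); auto.
    - intros t. apply (zt_deriv xi xi1 xi2); auto.
    - intros t. apply (Zt_cont xi xi1 xi2); auto.
    - unfold zt. destruct Rlt_dec; [lra|ring].
    - intros t Ht. apply (K_le_Zt xi xi1 xi2); auto. }
  destruct (Rle_lt_or_eq_dec 0 x Hx) as [Hx'|<-].
  - destruct (L_vi k delta x HK Hdelta Hx') as [L [DL HL]].
    rewrite (pDx_pos _ _ L Hx'); auto.
    apply is_derive_Reals.
    apply is_derive_ext_loc with (fun s => sqrt (s * Hk k s)); auto.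
    apply loc_pos; auto. intros s Hs. unfold psiR. rewrite Eh by lra. reflexivity.
  - rewrite (pDx_zero _ (sqrt 2)).
    + rewrite <- (H1 0) by lra. pose proof (H2 0). rewrite (H1 0) by lra.
      rewrite <- Rsqr_pow2, Rsqr_sqrt by lra. lra.
    + intros eps Heps. exists 1. split; [lra|]. intros h Hh.
      assert (EH : Hk k h = 2 * h).
      { unfold Hk. rewrite (RInt_ext _ (fun _ => 2)).
        - rewrite RInt_const'. change (2 * (h - 0) = 2 * h). ring.
        - intros t Ht. rewrite Rmin_left in Ht by lra. rewrite Rmax_right in Ht by lra.
          apply H1. lra. }
      unfold psiR. replace (0 + h) with h by ring. rewrite !Eh by lra. rewrite EH.
      rewrite Rmult_0_l, sqrt_0.
      replace (h * (2 * h)) with ((sqrt 2 * h) ^ 2).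
      2:{ rewrite <- Rsqr_pow2. unfold Rsqr. replace (sqrt 2 * h * (sqrt 2 * h)) with ((sqrt 2 * sqrt 2) * h * h) by ring.
          rewrite sqrt_sqrt by lra. ring. }
      rewrite sqrt_pow2 by (pose proof (sqrt_pos 2); nra).
      replace ((sqrt 2 * h - 0) / h - sqrt 2) with 0 by (field; lra).
      rewrite Rabs_R0. lra.
Qed.
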